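(* Let $G=(V,E)$ be a graph and $X \subseteq V$ a set of vertices such that every vertex of $V \setminus X$ has degree at most $2$ in $G$. For all positive integers $\ell, p$: if there exists a set $S \subseteq V$ with $|S| \le p$ such that every connected component of $G - S$ has at most $\ell$ vertices, then there exists such a set $S$ (with $|S| \le p$ and all components of $G-S$ of size at most $\ell$) which additionally satisfies: for every cycle $C$ of $G$ with $C \cap X \neq \emptyset$, either $C \cap S = \emptyset$ or $C \cap X \cap S \neq \emptyset$.
   Context: Graphs are finite, simple and undirected; a cycle $C$ is identified with its vertex set when intersecting with vertex sets. *)

(* Defs.v *)
From mathcomp Require Import all_boot.
Set Implicit Arguments. Unset Strict Implicit. Unset Printing Implicit Defensive.

(* A finite simple graph: vertex type T : finType, symmetric irreflexive e. *)

Definition deg (T : finType) (e : rel T) (v : T) : nat := #|[set w | e v w]|.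

Definition del_rel (T : finType) (e : rel T) (S : {set T}) : rel T :=
  [rel x y | [&& e x y, x \notin S & y \notin S]].

(* vertex set of the connected component of v in G - S (v assumed outside S) *)
Definition comp_of (T : finType) (e : rel T) (S : {set T}) (v : T) : {set T} :=
  [set w | connect (del_rel e S) v w].

Definition comps_bounded (T : finType) (e : rel T) (S : {set T}) (l : nat) : Prop :=
  forall v, v \notin S -> #|comp_of e S v| <= l.

(* c is (a cyclic listing of the vertices of) a cycle of G:
   at least 3 distinct vertices, consecutive ones adjacent, last adjacent to first *)
Definition is_cycle (T : finType) (e : rel T) (c : seq T) : Prop :=
  [/\ 3 <= size c, uniq c & cycle e c].

Definition cset (T : finType) (c : seq T) : {set T} := [set x in c].

(* Main.v *)
Require Import Defs.
From mathcomp Require Import all_boot.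
Set Implicit Arguments. Unset Strict Implicit. Unset Printing Implicit Defensive.

Section Cyc.
Variables (T : finType) (e : rel T) (e_sym : symmetric e) (X : {set T})
  (HX : forall v, v \notin X -> deg e v <= 2) (c : seq T)
  (c3 : 3 <= size c) (Uc : uniq c) (Cc : cycle e c).

Local Notation f := (next c).
Local Notation g := (prev c).

Lemma gf : cancel f g. Proof. exact: prev_next. Qed.
Lemma fg : cancel g f. Proof. exact: next_prev. Qed.
Lemma f_out x : x \notin c -> f x = x.
Proof. by rewrite next_nth => /negbTE ->. Qed.
Lemma g_out x : x \notin c -> g x = x.
Proof. by rewrite prev_nth => /negbTE ->. Qed.

Lemma iter_gf r : cancel (iter r f) (iter r g).
Proof.
elim: r => // r IH x; rewrite [iter r.+1 f x]iterS [iter r.+1 g _]iterSr gf; exact: IH.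
Qed.
Lemma iter_fg r : cancel (iter r g) (iter r f).
Proof.
elim: r => // r IH x; rewrite [iter r.+1 g x]iterS [iter r.+1 f _]iterSr fg; exact: IH.
Qed.
Lemma iter_g_f r x : iter r g (f x) = f (iter r g x).
Proof.
by elim: r => // r IH; rewrite /= IH gf fg.
Qed.
Lemma iter_g_g r x : iter r g (g x) = g (iter r g x).
Proof. by rewrite -iterSr iterS. Qed.
Lemma mem_iter_g r x : (iter r g x \in c) = (x \in c).
Proof. elim: r => //= r IH; by rewrite mem_prev. Qed.
Lemma mem_iter_f r x : (iter r f x \in c) = (x \in c).
Proof. elim: r => //= r IH; by rewrite mem_next. Qed.
Lemma iter_f_out r x : x \notin c -> iter r f x = x.
Proof. move=> H; elim: r => //= r ->; exact: f_out. Qed.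
Lemma iter_g_out r x : x \notin c -> iter r g x = x.
Proof. move=> H; elim: r => //= r ->; exact: g_out. Qed.

Lemma fcyc : fcycle f c. Proof. exact: cycle_next. Qed.

Lemma f_neq_g x : x \in c -> f x != g x.
Proof.
move=> xc; apply/negP => /eqP E.
have H2 : iter 2 f x = x by rewrite /= E fg.
have := findex_iter (f := f) (x := x) (i := 2).
rewrite (order_cycle fcyc Uc xc) H2 findex0 => /(_ c3) //.
Qed.

Lemma nbr_nonX x y : x \in c -> x \notin X -> e x y -> y = f x \/ y = g x.
Proof.
move=> xc xX exy.
have Hd := HX xX; rewrite /deg in Hd.
have sub : [set f x; g x] \subset [set w | e x w].
  apply/subsetP => w; rewrite !inE => /orP[] /eqP ->.
    exact: next_cycle.
  by rewrite e_sym; exact: prev_cycle.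
have := subset_leq_card sub; rewrite cards2 f_neq_g // => H.
have Eq : [set f x; g x] = [set w | e x w].
  by apply/eqP; rewrite eqEcard sub /= cards2 f_neq_g.
have : y \in [set w | e x w] by rewrite inE.
by rewrite -Eq !inE => /orP[] /eqP ->; [left|right].
Qed.


Variables (S : {set T}) (l : nat) (Hb : comps_bounded e S l)
  (Hbad : forall z, z \in c -> z \in X -> z \notin S)
  (y0 x0 : T) (y0c : y0 \in c) (y0S : y0 \in S) (x0c : x0 \in c) (x0X : x0 \in X).

Definition Pt t := (0 < t) && [exists y, [&& y \in S, y \in c & iter t f y \in X]].

Lemma Pex : exists t, Pt t.
Proof.
have hc : fconnect f y0 x0 by rewrite (fconnect_cycle fcyc y0c).
exists (findex f y0 x0); apply/andP; split.
  rewrite lt0n; apply/negP => /eqP H0.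
  have := iter_findex hc; rewrite H0 /= => E.
  by move: (Hbad x0c x0X); rewrite -E y0S.
by apply/existsP; exists y0; rewrite y0S y0c (iter_findex hc) x0X.
Qed.

Definition r := ex_minn Pex.
Lemma Pr : Pt r. Proof. rewrite /r; by case: ex_minnP. Qed.
Lemma rmin t : Pt t -> r <= t. Proof. rewrite /r; case: ex_minnP => m _ H; exact: H. Qed.

Local Notation sig := (iter r f).
Local Notation sig' := (iter r g).
Definition S' := sig @: S.

Lemma sig_inj : injective sig. Proof. exact: can_inj (iter_gf r). Qed.

Lemma notS'_back w : w \notin S' -> sig' w \notin S.
Proof.
apply: contra => H; rewrite -[w](iter_fg r); exact: imset_f.
Qed.

Lemma noS_between z : z \in c -> z \in X -> z \notin S' ->
  forall k, k <= r -> iter k g z \notin S.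
Proof.
move=> zc zX zS' [|k] kr; first exact: Hbad.
apply/negP => uS.
have Pk : Pt k.+1.
  apply/andP; split => //; apply/existsP; exists (iter k.+1 g z).
  by rewrite uS mem_iter_g zc iter_fg zX.
have Ek : k.+1 = r by apply/eqP; rewrite eqn_leq kr rmin.
have uS' : iter r g z \in S by rewrite -Ek.
by move: zS'; rewrite -[z](iter_fg r) /S' (imset_f _ uS').
Qed.

Lemma del_sym : symmetric (del_rel e S).
Proof. by move=> x y; rewrite /del_rel /= e_sym; case: (x \in S); case: (y \in S); rewrite /= ?andbF. Qed.

Lemma conn_back z : z \notin S' -> (z \notin c) || (z \in X) ->
  connect (del_rel e S) (sig' z) z.
Proof.
move=> zS'; case zc: (z \in c) => /= zX; last first.
  by rewrite iter_g_out ?zc // connect0.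
have : forall k, k <= r -> connect (del_rel e S) (iter k g z) z.
  elim=> [|k IH] kr; first exact: connect0.
  apply: connect_trans (IH (ltnW kr)).
  have h1 : g (iter k g z) \notin S := noS_between zc zX zS' kr.
  have h2 := noS_between zc zX zS' (ltnW kr).
  by apply: connect1; rewrite /del_rel /= prev_cycle ?mem_iter_g // h1 h2.
by apply.
Qed.

Lemma notS_direct z : z \notin S' -> (z \notin c) || (z \in X) -> z \notin S.
Proof.
move=> zS'; case zc: (z \in c) => /= h; first exact: Hbad.
by have := notS'_back zS'; rewrite iter_g_out ?zc.
Qed.

Lemma edge_back x y : x \notin S' -> y \notin S' -> e x y ->
  connect (del_rel e S) (sig' x) (sig' y).
Proof.
have key : forall x y, x \notin S' -> y \notin S' -> e x y -> x \in c -> x \notin X ->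
    connect (del_rel e S) (sig' x) (sig' y).
  move=> a b aS bS eab ac aX.
  have a'S := notS'_back aS; have b'S := notS'_back bS.
  case: (nbr_nonX ac aX eab) => Eb; rewrite Eb in b'S *.
    rewrite iter_g_f in b'S *; apply: connect1.
    by rewrite /del_rel /= next_cycle ?mem_iter_g // a'S b'S.
  rewrite iter_g_g in b'S *; apply: connect1.
  by rewrite /del_rel /= e_sym prev_cycle ?mem_iter_g // a'S b'S.
move=> xS yS exy.
case: (boolP ((x \in c) && (x \notin X))) => [/andP[xc xX]|hx].
  exact: key.
case: (boolP ((y \in c) && (y \notin X))) => [/andP[yc yX]|hy].
  rewrite (sym_connect_sym del_sym); apply: key => //; by rewrite e_sym.
have hx' : (x \notin c) || (x \in X) by move: hx; rewrite negb_and negbK.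
have hy' : (y \notin c) || (y \in X) by move: hy; rewrite negb_and negbK.
apply: connect_trans (conn_back xS hx') _.
rewrite (sym_connect_sym del_sym); apply: connect_trans (conn_back yS hy') _.
have xS0 := notS'_back xS; have yS0 := notS'_back yS.
by apply: connect1; rewrite /del_rel /= e_sym exy /= (notS_direct xS hx') (notS_direct yS hy').
Qed.

Lemma path_back p x : x \notin S' -> path (del_rel e S') x p ->
  connect (del_rel e S) (sig' x) (sig' (last x p)).
Proof.
elim: p x => [|y p IH] x xS /=; first by move=> _; exact: connect0.
case/andP => /and3P[exy _ yS] hp.
apply: connect_trans (edge_back xS yS exy) (IH y yS hp).
Qed.

Lemma comps' : comps_bounded e S' l.
Proof.
move=> v vS.
have wS := notS'_back vS.
apply: leq_trans (Hb wS).
rewrite -(card_imset (comp_of e S (sig' v)) sig_inj).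
apply: subset_leq_card; apply/subsetP => y; rewrite inE => /connectP[p hp ->].
rewrite -[last v p](iter_fg r); apply: imset_f; rewrite inE.
exact: path_back.
Qed.

Lemma cardS' : #|S'| = #|S|.
Proof. exact: card_imset sig_inj. Qed.

Lemma moreX : #|S :&: X| < #|S' :&: X|.
Proof.
apply: proper_card; apply/properP; split.
  apply/subsetP => z; rewrite !inE => /andP[zS zX]; rewrite zX andbT.
  have zc : z \notin c by apply: contraL zS => zc; exact: Hbad.
  by rewrite -[z](iter_f_out r zc); apply: imset_f.
case/andP: Pr => _ /existsP[y /and3P[yS yc yX]].
exists (sig y); first by rewrite !inE yX andbT; apply: imset_f.
by rewrite !inE yX andbT; apply: Hbad => //; rewrite mem_iter_f.
Qed.

End Cyc.

From Stdlib Require Import Classical.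

Lemma step (T : finType) (e : rel T) (e_sym : symmetric e) (X : {set T})
  (HX : forall v, v \notin X -> deg e v <= 2) (l : nat) (S : {set T})
  (bS : comps_bounded e S l) (c : seq T) :
  is_cycle e c -> cset c :&: X != set0 ->
  ~ (cset c :&: S == set0 \/ cset c :&: X :&: S != set0) ->
  exists S2 : {set T}, [/\ #|S2| = #|S|, comps_bounded e S2 l & #|S :&: X| < #|S2 :&: X|].
Proof.
case=> c3 Uc Cc /set0Pn[x0]; rewrite !inE => /andP[x0c x0X] Hn.
have H1 : cset c :&: S != set0 by apply/negP => H; apply: Hn; left.
have H2 : cset c :&: X :&: S == set0 by apply/negPn/negP => H; apply: Hn; right.
case/set0Pn: H1 => y0; rewrite !inE => /andP[y0c y0S].
have Hbad : forall z, z \in c -> z \in X -> z \notin S.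
  move=> z zc zX; apply/negP => zS; move/eqP: H2 => H2.
  have : z \in cset c :&: X :&: S by rewrite !inE zc zX zS.
  by rewrite H2 inE.
exists (S' Uc Hbad y0c y0S x0c x0X); split.
- exact: cardS'.
- exact: (comps' e_sym HX c3 Cc bS).
- by apply: moreX.
Qed.

Theorem lemma9 (T : finType) (e : rel T) (e_sym : symmetric e)
  (e_irr : irreflexive e) (X : {set T})
  (HX : forall v, v \notin X -> deg e v <= 2)
  (l p : nat) (hl : 0 < l) (hp : 0 < p) :
  (exists S : {set T}, #|S| <= p /\ comps_bounded e S l) ->
  exists S : {set T}, [/\ #|S| <= p, comps_bounded e S l &
    forall c : seq T, is_cycle e c -> cset c :&: X != set0 ->
      cset c :&: S == set0 \/ cset c :&: X :&: S != set0].
Proof.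
move=> [S0 [h0 b0]].
suff H : forall k S, #|X| - #|S :&: X| <= k -> #|S| <= p -> comps_bounded e S l ->
  exists S : {set T}, [/\ #|S| <= p, comps_bounded e S l &
    forall c : seq T, is_cycle e c -> cset c :&: X != set0 ->
      cset c :&: S == set0 \/ cset c :&: X :&: S != set0].
  exact: (H _ S0 (leqnn _) h0 b0).
elim=> [|k IH] S hk hS bS.
all: case: (classic (forall c : seq T, is_cycle e c -> cset c :&: X != set0 ->
      cset c :&: S == set0 \/ cset c :&: X :&: S != set0)) => [Hall|Hn];
  first by exists S.
all: have [c Hc] := not_all_ex_not _ _ Hn.
all: have [Hc1 Hc'] := imply_to_and _ _ Hc.
all: have [Hc2 Hc3] := imply_to_and _ _ Hc'.
all: have [S2 [hc2 bs2 hx2]] := step e_sym HX bS Hc1 Hc2 Hc3.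
- have : #|S2 :&: X| <= #|X| by apply: subset_leq_card; apply: subsetIr.
  move: hk hx2; rewrite leq_subLR addn0 => hk hx2 h3.
  by have := leq_trans hx2 (leq_trans h3 hk); rewrite ltnn.
- apply: (IH S2) => //; last by rewrite hc2.
  have : #|S2 :&: X| <= #|X| by apply: subset_leq_card; apply: subsetIr.
  move=> h3; rewrite leq_subLR in hk; rewrite leq_subLR.
  by apply: leq_trans hk _; rewrite addnS -addSn leq_add2r.
Qed.
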